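(* Let $S\subseteq\mathbb{R}^n$ be closed, $\bar x\in S$ and $d\in T_S(\bar x)$. Then $$N_{T_S^2(\bar x;d)}(w)\subseteq N_S(\bar x;d)\ \ \forall w\in T_S^2(\bar x;d),\qquad N_{T_S^{''}(\bar x;d)}(w)\subseteq N_S(\bar x;d)\ \ \forall w\in T_S^{''}(\bar x;d).$$
   Context: $T_S(\bar x)$ is the Bouligand tangent cone. $T_S^2(\bar x;d):=\{w\mid \exists t_k\downarrow 0,\ w_k\to w,\ \bar x+t_kd+\tfrac12 t_k^2w_k\in S\}$; $T_S^{''}(\bar x;d):=\{w\mid \exists (t_k,r_k)\downarrow(0,0),\ w_k\to w,\ t_k/r_k\to0,\ \bar x+t_kd+\tfrac12 t_kr_kw_k\in S\}$. For a closed set $A$, $\hat N_A(x)$ is the Fréchet normal cone ($\hat N_A(x)=\emptyset$ if $x\notin A$), $N_A(x)=\limsup_{x'\to_A x}\hat N_A(x')$ is the limiting normal cone. The directional limiting normal cone is $N_S(\bar x;d):=\limsup_{t\downarrow0,\,d'\to d}\hat N_S(\bar x+td')$ (Painlevé–Kuratowski outer limit). *)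

(* Defs.v *)
From HB Require Import structures.
From mathcomp Require Import all_boot all_order all_algebra.
From mathcomp Require Import all_classical all_reals topology normedtype sequences.
Set Implicit Arguments. Unset Strict Implicit. Unset Printing Implicit Defensive.
Import Order.TTheory GRing.Theory Num.Theory.
Import numFieldNormedType.Exports.
Local Open Scope classical_set_scope.
Local Open Scope ring_scope.

Section VarAnal.
Variables (R : realType) (n : nat).
Implicit Types (A S : set 'rV[R]_n) (x d w u v : 'rV[R]_n).

Definition dotv u v : R := \sum_(i < n) u ord0 i * v ord0 i.
Definition enorm u : R := Num.sqrt (dotv u u).

(* Frechet (regular) normal cone; empty when x is not in A *)
Definition frechet_normal A x : set 'rV[R]_n :=
  [set v | A x /\ forall eps : R, 0 < eps -> exists2 delta : R, 0 < delta &
     forall y, A y -> enorm (y - x) < delta -> dotv v (y - x) <= eps * enorm (y - x)].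

(* limiting normal cone: Painleve-Kuratowski outer limit of Frechet cones along x' ->_A x *)
Definition limiting_normal A x : set 'rV[R]_n :=
  [set v | exists (xk vk : nat -> 'rV[R]_n),
     [/\ forall k, A (xk k), xk @ \oo --> x, vk @ \oo --> v &
         forall k, frechet_normal A (xk k) (vk k)]].

Definition dir_limiting_normal S x d : set 'rV[R]_n :=
  [set v | exists (t : nat -> R) (dk vk : nat -> 'rV[R]_n),
     [/\ forall k, 0 < t k, t @ \oo --> 0, dk @ \oo --> d, vk @ \oo --> v &
         forall k, frechet_normal S (x + t k *: dk k) (vk k)]].

Definition tangent_cone S x : set 'rV[R]_n :=
  [set d | exists (t : nat -> R) (dk : nat -> 'rV[R]_n),
     [/\ forall k, 0 < t k, t @ \oo --> 0, dk @ \oo --> d &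
         forall k, S (x + t k *: dk k)]].

Definition second_tangent S x d : set 'rV[R]_n :=
  [set w | exists (t : nat -> R) (wk : nat -> 'rV[R]_n),
     [/\ forall k, 0 < t k, t @ \oo --> 0, wk @ \oo --> w &
         forall k, S (x + t k *: d + (2^-1 * t k ^+ 2) *: wk k)]].

Definition asymp_second_tangent S x d : set 'rV[R]_n :=
  [set w | exists (t r : nat -> R) (wk : nat -> 'rV[R]_n),
     [/\ forall k, 0 < t k /\ 0 < r k, t @ \oo --> 0 /\ r @ \oo --> 0,
         (fun k => t k / r k) @ \oo --> 0, wk @ \oo --> w &
         forall k, S (x + t k *: d + (2^-1 * t k * r k) *: wk k)]].

End VarAnal.

(* Main.v *)
Require Import Defs.
From HB Require Import structures.
From mathcomp Require Import all_boot all_order all_algebra.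
From mathcomp Require Import all_classical all_reals topology normedtype sequences.
From mathcomp Require Import ring lra interval_inference.
Import Order.TTheory GRing.Theory Num.Theory.
Import numFieldNormedType.Exports.
Local Open Scope classical_set_scope.
Local Open Scope ring_scope.
Section Eucl.
Variables (R : realType) (n : nat).
Implicit Types (u v w : 'rV[R]_n).
Local Notation Q u := (dotv u u).
Local Notation E := (@enorm R n).

Lemma dotvC u v : dotv u v = dotv v u.
Proof. by rewrite /dotv; apply: eq_bigr => i _; rewrite mulrC. Qed.
Lemma dotvDl u v w : dotv (u + v) w = dotv u w + dotv v w.
Proof. by rewrite /dotv -big_split; apply: eq_bigr => i _; rewrite mxE mulrDl. Qed.
Lemma dotvZl a u v : dotv (a *: u) v = a * dotv u v.
Proof. by rewrite /dotv mulr_sumr; apply: eq_bigr => i _; rewrite mxE mulrA. Qed.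
Lemma dotvNl u v : dotv (- u) v = - dotv u v.
Proof. by rewrite -scaleN1r dotvZl mulN1r. Qed.
Lemma dotvBl u v w : dotv (u - v) w = dotv u w - dotv v w.
Proof. by rewrite dotvDl dotvNl. Qed.
Lemma dotvDr u v w : dotv w (u + v) = dotv w u + dotv w v.
Proof. by rewrite dotvC dotvDl !(dotvC w). Qed.
Lemma dotvZr a u v : dotv v (a *: u) = a * dotv v u.
Proof. by rewrite dotvC dotvZl dotvC. Qed.
Lemma dotvBr u v w : dotv w (u - v) = dotv w u - dotv w v.
Proof. by rewrite dotvC dotvBl !(dotvC w). Qed.

Lemma Q_ge0 u : 0 <= Q u.
Proof. by rewrite /dotv sumr_ge0 // => i _; rewrite -expr2 sqr_ge0. Qed.
Lemma coord_leQ u i : u ord0 i ^+ 2 <= Q u.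
Proof.
rewrite /dotv (bigD1 i) //= -expr2 lerDl sumr_ge0 // => j _.
by rewrite -expr2 sqr_ge0.
Qed.
Lemma QB u v : Q (u - v) = Q u - 2 * dotv u v + Q v.
Proof. rewrite dotvBl !dotvBr (dotvC v u); ring. Qed.
Lemma QD u v : Q (u + v) = Q u + 2 * dotv u v + Q v.
Proof. rewrite dotvDl !dotvDr (dotvC v u); ring. Qed.
Lemma QZ a u : Q (a *: u) = a ^+ 2 * Q u.
Proof. rewrite dotvZl dotvZr; ring. Qed.
Lemma QN u : Q (- u) = Q u.
Proof. by rewrite dotvNl dotvC dotvNl opprK. Qed.

Lemma E_ge0 u : 0 <= E u.
Proof. exact: sqrtr_ge0. Qed.
Lemma E_sqr u : E u ^+ 2 = Q u.
Proof. by rewrite sqr_sqrtr // Q_ge0. Qed.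
Lemma EZ a u : E (a *: u) = `|a| * E u.
Proof. by rewrite /enorm QZ sqrtrM ?sqr_ge0 // sqrtr_sqr. Qed.
Lemma EN u : E (- u) = E u.
Proof. by rewrite /enorm QN. Qed.
Lemma EB u v : E (u - v) = E (v - u).
Proof. by rewrite -EN opprB. Qed.

Lemma Q0_dot u v : Q u = 0 -> dotv u v = 0.
Proof.
move=> Hu; rewrite /dotv big1 // => i _.
have := coord_leQ u i; rewrite Hu => H.
have : u ord0 i ^+ 2 = 0 by apply/eqP; rewrite eq_le H sqr_ge0.
by move/eqP; rewrite sqrf_eq0 => /eqP ->; rewrite mul0r.
Qed.

Lemma CS u v : dotv u v <= E u * E v.
Proof.
have [A0|Apos] := eqVneq (E u) 0.
  by rewrite Q0_dot ?A0 ?mul0r // -E_sqr A0 expr0n.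
have [B0|Bpos] := eqVneq (E v) 0.
  by rewrite dotvC Q0_dot ?B0 ?mulr0 // -E_sqr B0 expr0n.
have Ag : 0 < E u by rewrite lt_def Apos E_ge0.
have Bg : 0 < E v by rewrite lt_def Bpos E_ge0.
have := Q_ge0 (E v *: u - E u *: v).
rewrite QB QZ QZ dotvZl dotvZr -!E_sqr => H.
have H2 : 0 <= 2 * (E u * E v) * (E u * E v - dotv u v) by nra.
have : 0 < 2 * (E u * E v) by rewrite mulr_gt0 // mulr_gt0.
move=> P; move: H2; rewrite pmulr_rge0 // subr_ge0 //.
Qed.

Lemma E_triangle u v : E (u + v) <= E u + E v.
Proof.
rewrite -(ger0_norm (addr_ge0 (E_ge0 u) (E_ge0 v))) -sqrtr_sqr.
apply: ler_wsqrtr; rewrite QD sqrrD !E_sqr.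
by have := CS u v; lra.
Qed.

Lemma coord_leE u i : `|u ord0 i| <= E u.
Proof. by rewrite -sqrtr_sqr; apply: ler_wsqrtr; apply: coord_leQ. Qed.

Lemma coord_le_mx u i : `|u ord0 i| <= `|u|.
Proof.
change `|u| with (mx_norm u); rewrite mx_normrE.
exact: (@le_bigmax _ _ _ 0 (fun ij : 'I_1 * 'I_n => `|u ij.1 ij.2|) (ord0, i)).
Qed.

Lemma mx_le_E u : `|u| <= E u.
Proof.
change `|u| with (mx_norm u); rewrite mx_normrE; apply: bigmax_le => [|[i j] _]; first exact: E_ge0.
by rewrite (ord1 i) coord_leE.
Qed.

Lemma E_le_mx u : E u <= n.+1%:R * `|u|.
Proof.
have h0 : 0 <= `|u| by [].
rewrite -(ger0_norm (mulr_ge0 (ler0n _ n.+1) h0)) -sqrtr_sqr.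
apply: ler_wsqrtr; rewrite /dotv.
apply: (@le_trans _ _ (\sum_(i < n) `|u|^+2)).
  apply: ler_sum => i _; rewrite -expr2 -real_normK ?num_real //.
  by rewrite lerXn2r ?nnegrE ?coord_le_mx.
rewrite sumr_const card_ord exprMn -[X in X <= _]mulr_natl.
rewrite -subr_ge0 -mulrBl; apply: mulr_ge0; last exact: sqr_ge0.
rewrite subr_ge0 -natrX ler_nat expnS; apply: (@leq_trans (n.+1)) => //.
by rewrite leq_pmulr.
Qed.

End Eucl.
Arguments dotvC {R n}.
Arguments dotvDl {R n}.
Arguments dotvZl {R n}.
Arguments dotvNl {R n}.
Arguments dotvBl {R n}.
Arguments dotvDr {R n}.
Arguments dotvZr {R n}.
Arguments dotvBr {R n}.
Arguments Q_ge0 {R n}.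
Arguments coord_leQ {R n}.
Arguments QB {R n}.
Arguments QD {R n}.
Arguments QZ {R n}.
Arguments QN {R n}.
Arguments E_ge0 {R n}.
Arguments E_sqr {R n}.
Arguments EZ {R n}.
Arguments EN {R n}.
Arguments EB {R n}.
Arguments Q0_dot {R n}.
Arguments CS {R n}.
Arguments E_triangle {R n}.
Arguments coord_leE {R n}.
Arguments coord_le_mx {R n}.
Arguments mx_le_E {R n}.
Arguments E_le_mx {R n}.
Section Topo.
Variables (R : realType) (n : nat).
Local Notation E := (@enorm R n).
Local Notation Q u := (@dotv R n u u).

Lemma subseq_cvg (T : topologicalType) (u : nat -> T) (l : T) (phi : nat -> nat) :
  (forall j, (j <= phi j)%N) -> u @ \oo --> l -> (u \o phi) @ \oo --> l.
Proof.
move=> Hphi Hu; apply: cvg_comp Hu.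
move=> P [N _ HN]; exists N => // j /= Hj; apply: HN => /=.
exact: leq_trans Hj (Hphi j).
Qed.

Lemma natSinv_small : forall (e : R), 0 < e -> \forall k \near \oo, k.+1%:R^-1 < e.
Proof. by move=> e e0; exact: (near_infty_natSinv_lt (PosNum e0)). Qed.

Lemma small_seq_cvg (V : pseudoMetricNormedZmodType R) (a : nat -> V) (l : V) :
  (forall k, `|a k - l| < k.+1%:R^-1) -> a @ \oo --> l.
Proof.
move=> H; apply/cvgrPdist_lt => e e0.
near=> k; rewrite distrC (lt_trans (H k)) //.
near: k; exact: natSinv_small.
Unshelve. all: end_near. Qed.

Lemma BW_rV (y : nat -> 'rV[R]_n) (M : R) : (forall k, `|y k| <= M) ->
  exists phi (l : 'rV[R]_n), (forall j, (j <= phi j)%N) /\ (y \o phi) @ \oo --> l.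
Proof.
move=> HM.
pose A := closed_ball_ (fun x : 'rV[R]_n => `|x|) 0 M.
have Ac : closed A by exact: closed_closed_ball_.
have Ab : bounded_set A.
  exists M; split; first by rewrite num_real.
  move=> M' HM' x /=; rewrite /A /closed_ball_ /= sub0r normrN => Hx.
  by rewrite (le_trans Hx) // ltW.
have FA : (y @ \oo) A.
  by exists 0%N => // k _; rewrite /A /closed_ball_ /= sub0r normrN.
have [l [_ Hcl]] := bounded_closed_compact Ab Ac _ FA.
have Hj : forall j, exists k, (j <= k)%N /\ `|l - y k| < j.+1%:R^-1.
  move=> j.
  have Fj : (y @ \oo) [set y k | k in [set k | (j <= k)%N]].
    by exists j => // k Hk; exists k.
  have Bj : nbhs l (ball l j.+1%:R^-1) by apply: nbhsx_ballx.
  have [z [[k Hk <-] Hb]] := Hcl _ _ Fj Bj.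
  by exists k; split => //; move: Hb; rewrite -ball_normE.
have [phi Hphi] := choice Hj.
exists phi, l; split; first by move=> j; case: (Hphi j).
apply: small_seq_cvg => k /=; rewrite distrC; by case: (Hphi k).
Qed.

Lemma mx_E_cvg (y : nat -> 'rV[R]_n) (l : 'rV[R]_n) (e : R) : 0 < e -> y @ \oo --> l ->
  \forall k \near \oo, E (y k - l) < e.
Proof.
move=> e0 /cvgrPdist_lt H.
have e1 : 0 < e / n.+1%:R by rewrite divr_gt0.
have := H _ e1; apply: filterS => k Hk.
rewrite (le_lt_trans (E_le_mx _)) // -ltr_pdivlMl ?ltr0n // mulrC.
by rewrite distrC in Hk.
Qed.

Lemma proj_exists (S : set 'rV[R]_n) (a0 p : 'rV[R]_n) : closed S -> S a0 ->
  exists q, S q /\ forall y, S y -> E (p - q) <= E (p - y).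
Proof.
move=> Sc Sa0.
pose D := [set E (p - y) | y in S].
have Dlb : has_lbound D by exists 0 => _ [y _ <-]; exact: E_ge0.
have Dne : D !=set0 by exists (E (p - a0)), a0.
have Hk : forall k, exists y, S y /\ E (p - y) < inf D + k.+1%:R^-1.
  move=> k; have hk : 0 < k.+1%:R^-1 :> R by rewrite invr_gt0 ltr0Sn.
  have [_ [y Sy <-] Hy] := inf_adherent hk (conj Dne Dlb).
  by exists y.
have [yk Hyk] := choice Hk.
have infle : forall y, S y -> inf D <= E (p - y).
  by move=> y Sy; apply: ge_inf => //; exists y.
have Hb : forall k, `|yk k| <= E p + (inf D + 1).
  move=> k; have [Sy Hy] := Hyk k.
  rewrite (le_trans (mx_le_E _)) //.
  have -> : yk k = p - (p - yk k) by rewrite opprB addrC subrK.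
  rewrite (le_trans (E_triangle _ _)) // EN lerD2l (ltW (lt_le_trans Hy _)) //.
  by rewrite lerD2l invf_le1 // ler1n.
have [phi [l [Hphi Hl]]] := BW_rV _ _ Hb.
have Sl : S l.
  apply: (closed_cvg _ Sc _ _ Hl); near=> m; by case: (Hyk (phi m)).
exists l; split => // y Sy.
apply: le_trans (infle y Sy).
apply/ler_addgt0Pr => e e0.
have e2 : 0 < e / 2 by rewrite divr_gt0.
have Hn1 := natSinv_small _ e2.
have Hn2 := mx_E_cvg _ _ _ e2 Hl.
have [j [Hj1 Hj2]] : exists j, j.+1%:R^-1 < e / 2 /\ E ((yk \o phi) j - l) < e / 2.
  have := filterI Hn1 Hn2; case=> N _ HN; exists N; by apply: HN => /=.
case: (Hyk (phi j)) => _ Hy.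
have -> : p - l = (p - yk (phi j)) + (yk (phi j) - l) by rewrite addrA subrK.
rewrite (le_trans (E_triangle _ _)) //.
have : (phi j).+1%:R^-1 <= j.+1%:R^-1 :> R.
  by rewrite lef_pV2 ?posrE ?ler_nat ?ltnS ?Hphi.
move: Hy Hj1 Hj2 => /=.
move: ((phi j).+1%:R^-1) (j.+1%:R^-1 : R) => a b; lra.
Unshelve. all: end_near. Qed.

Lemma prox_frechet (S : set 'rV[R]_n) (p q : 'rV[R]_n) (c : R) : S q ->
  (forall y, S y -> E (p - q) <= E (p - y)) -> 0 < c ->
  frechet_normal S q (c *: (p - q)).
Proof.
move=> Sq Hq c0; split => // eps eps0.
exists (2 * eps / c); first by rewrite !mulr_gt0 ?invr_gt0.
move=> y Sy Hy.
have H1 : Q (p - q) <= Q (p - y).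
  rewrite -!E_sqr lerXn2r ?nnegrE ?E_ge0 //; exact: Hq.
have Hpy : p - y = (p - q) - (y - q) by rewrite opprB addrA subrK.
move: H1; rewrite Hpy (QB (p - q) (y - q)) -(E_sqr (y - q)) => H1.
rewrite dotvZl.
have Eh := E_ge0 (y - q).
have H2 : c * E (y - q) < 2 * eps by rewrite -ltr_pdivlMl // mulrC.
nra.
Qed.

End Topo.
Arguments natSinv_small {R}.
Arguments small_seq_cvg {R}.
Arguments BW_rV {R n}.
Arguments mx_E_cvg {R n}.
Arguments proj_exists {R n}.
Arguments prox_frechet {R n}.
Section Core.
Variables (R : realType) (n : nat) (S : set 'rV[R]_n) (x d : 'rV[R]_n).
Variable A : (nat -> R) -> (nat -> R) -> Prop.
Hypothesis HA_pos : forall t tau, A t tau -> forall k, 0 < t k /\ 0 < tau k.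
Hypothesis HA_t : forall t tau, A t tau -> t @ \oo --> (0 : R).
Hypothesis HA_r : forall t tau, A t tau -> (fun k => tau k / t k) @ \oo --> (0 : R).
Hypothesis HA_sub : forall t tau (phi : nat -> nat), A t tau ->
  (forall j, (j <= phi j)%N) -> A (t \o phi) (tau \o phi).
Local Notation E := (@enorm R n).
Local Notation Q u := (@dotv R n u u).

Definition CA : set 'rV[R]_n := [set w | exists t tau (wk : nat -> 'rV[R]_n),
  [/\ A t tau, wk @ \oo --> w & forall k, S (x + t k *: d + tau k *: wk k)]].

Lemma CA_prep w : CA w -> exists t tau (wk : nat -> 'rV[R]_n),
  [/\ A t tau, wk @ \oo --> w, forall k, S (x + t k *: d + tau k *: wk k)
    & forall k, `|w - wk k| < 1].
Proof.
case=> t [tau [wk [HA Hwk HS]]].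
have /cvgrPdist_lt /(_ 1 ltr01) [N _ HN] := Hwk.
pose phi := fun k => (k + N)%N.
have Hphi : forall j, (j <= phi j)%N by move=> j; rewrite leq_addr.
exists (t \o phi), (tau \o phi), (wk \o phi); split.
- exact: HA_sub.
- exact: subseq_cvg.
- by move=> k; apply: HS.
- by move=> k; apply: HN; rewrite /= leq_addl.
Qed.

Lemma core w v : closed S -> CA w -> frechet_normal CA w v ->
  forall eta : R, 0 < eta -> exists t (d' u : 'rV[R]_n),
  [/\ 0 < t, t < eta, `|d' - d| < eta, `|u - v| < eta & frechet_normal S (x + t *: d') u].
Proof.
move=> Sc Cw [_ Hfr] eta eta0.
have [t [tau [wk [HA Hwk HS Hwb]]]] := CA_prep _ Cw.
pose eps := eta / 8.
have eps0 : 0 < eps by rewrite divr_gt0.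
have Heps : eps = eta / 8 by [].
clearbody eps.
have [delta delta0 Hdel] := Hfr eps eps0.
pose V := E v.
have V0 : 0 <= V by exact: E_ge0.
pose s := delta / (2 * (V + 1)).
have s0 : 0 < s by rewrite divr_gt0 // mulr_gt0 // ltr_pwDr.
have sV : 2 * s * V < delta.
  have Hs : s * (2 * (V + 1)) = delta.
    by rewrite /s divfK // mulf_neq0 // gt_eqF // ltr_pwDr.
  nra.
have HV : V = E v by [].
clearbody V s.
pose z := w + s *: v.
pose p := fun k => x + t k *: d + tau k *: z.
have Hq : forall k, exists q, S q /\ forall y, S y -> E (p k - q) <= E (p k - y).
  move=> k; exact: (proj_exists _ _ (p k) Sc (HS 0%N)).
have [q Hq'] := choice Hq.
pose y := fun k => (tau k)^-1 *: (q k - x - t k *: d).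
have Hyq : forall k, q k = x + t k *: d + tau k *: y k.
  move=> k; rewrite /y scalerA mulfV ?scale1r; last first.
    by case: (HA_pos _ _ HA k) => _ h; rewrite gt_eqF.
  by rewrite -[q k - x - _]addrA -opprD addrC addrA subrr add0r.
have Hpq : forall k, p k - q k = tau k *: (z - y k).
  by move=> k; rewrite Hyq /p scalerBr opprD addrACA subrr add0r addrC.
have Hzy : forall k, E (z - y k) <= E (z - wk k).
  move=> k; case: (Hq' k) => _ Hmin.
  have := Hmin _ (HS k).
  have -> : p k - (x + t k *: d + tau k *: wk k) = tau k *: (z - wk k).
    by rewrite /p scalerBr opprD addrACA subrr add0r addrC.
  case: (HA_pos _ _ HA k) => _ tk0.
  by rewrite Hpq !EZ gtr0_norm // ler_pM2l.
have Hyb : forall k, `|y k| <= E z + E (z - w) + n.+1%:R.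
  move=> k; rewrite (le_trans (mx_le_E _)) //.
  have -> : y k = z - (z - y k) by rewrite opprB addrC subrK.
  rewrite (le_trans (E_triangle _ _)) // EN -[E z + E (z - w) + _]addrA lerD2l.
  rewrite (le_trans (Hzy k)) //.
  have -> : z - wk k = (z - w) + (w - wk k) by rewrite addrA subrK.
  rewrite (le_trans (E_triangle _ _)) // lerD2l (le_trans (E_le_mx _)) //.
  by rewrite ler_piMr // ltW.
have [phi [ys [Hphi Hys]]] := BW_rV _ _ Hyb.
have Cys : CA ys.
  exists (t \o phi), (tau \o phi), (y \o phi); split.
  - exact: HA_sub.
  - exact: Hys.
  - by move=> k /=; rewrite -Hyq; case: (Hq' (phi k)).
have Ezw : E (z - w) = s * V by rewrite /z addrC addKr EZ gtr0_norm // HV.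
have Ezys : E (z - ys) <= s * V.
  rewrite -Ezw; apply/ler_addgt0Pr => e e0.
  have e2 : 0 < e / 2 by rewrite divr_gt0.
  have Hn1 := mx_E_cvg _ _ _ e2 Hys.
  have Hn2 := mx_E_cvg _ _ _ e2 (subseq_cvg _ _ _ _ Hphi Hwk).
  have [j [Hj1 Hj2]] : exists j, E ((y \o phi) j - ys) < e / 2 /\
      E ((wk \o phi) j - w) < e / 2.
    by have := filterI Hn1 Hn2; case=> N _ HN; exists N; apply: HN => /=.
  have -> : z - ys = (z - y (phi j)) + (y (phi j) - ys) by rewrite addrA subrK.
  rewrite (le_trans (E_triangle _ _)) //.
  have H3 := Hzy (phi j).
  have H4 : E (z - wk (phi j)) <= E (z - w) + E (wk (phi j) - w).
    have -> : z - wk (phi j) = (z - w) + (w - wk (phi j)) by rewrite addrA subrK.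
    by rewrite (le_trans (E_triangle _ _)) // (EB w).
  move: Hj1 Hj2 => /= Hj1 Hj2; lra.
pose h := ys - w.
have Hzh : z - ys = s *: v - h by rewrite /h /z opprB addrA (addrC (s *: v)).
have Hh : h = ys - w by [].
clearbody h.
have Qh : Q h <= 2 * s * dotv v h.
  have : Q (z - ys) <= (s * V) ^+ 2.
    rewrite -E_sqr lerXn2r ?nnegrE //; [exact: E_ge0 | exact: mulr_ge0 (ltW s0) V0].
  rewrite Hzh QB QZ dotvZl -E_sqr -HV => H; nra.
have Eh : E h <= 2 * s * V.
  have -> : h = - (s *: v - h) + s *: v by rewrite opprB subrK.
  rewrite (le_trans (E_triangle _ _)) // EN -Hzh EZ gtr0_norm // -HV; nra.
have Hvh : dotv v h <= eps * E h.
  by rewrite Hh; apply: Hdel => //; rewrite -Hh (le_lt_trans Eh).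
have Eh2 : E h <= 2 * s * eps.
  have Ehge := E_ge0 h.
  have H5 : s * dotv v h <= s * (eps * E h) by rewrite ler_pM2l.
  have : E h ^+ 2 <= 2 * s * eps * E h.
    rewrite E_sqr; apply: (le_trans Qh).
    by rewrite -[2 * s * eps * _]mulrA ler_pM2l ?mulr_gt0.
  move=> H; have [E0|Epos] := eqVneq (E h) 0.
    by rewrite E0 !mulr_ge0 // ltW.
  have Ep : 0 < E h by rewrite lt_def Epos Ehge.
  by move: H; rewrite expr2 ler_pM2r.
pose us := s^-1 *: (z - ys).
have Hus : `|us - v| <= eta / 4.
  have -> : us - v = - (s^-1 *: h).
    rewrite /us Hzh scalerBr scalerA mulVf ?gt_eqF // scale1r.
    by rewrite addrC addKr.
  rewrite (le_trans (mx_le_E _)) // EN EZ gtr0_norm ?invr_gt0 //.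
  rewrite ler_pdivrMl // (le_trans Eh2) //.
  rewrite Heps -mulrA mulrCA ler_pM2l //; lra.
pose dk := fun k => d + (tau k / t k) *: y k.
have Hdk : (dk \o phi) @ \oo --> d.
  rewrite -[X in _ --> X]addr0; apply: cvgD; first exact: cvg_cst.
  rewrite -(scale0r ys); apply: cvgZ => //.
  exact: (HA_r _ _ (HA_sub _ _ _ HA Hphi)).
have Huk : (fun k => s^-1 *: (z - y (phi k))) @ \oo --> us.
  apply: cvgZ; first exact: cvg_cst.
  apply: cvgB; first exact: cvg_cst.
  exact: Hys.
have Htk : (t \o phi) @ \oo --> (0 : R) := HA_t _ _ (HA_sub _ _ _ HA Hphi).
have eta2 : 0 < eta / 2 by rewrite divr_gt0.
have [j [Hj1 [Hj2 Hj3]]] : exists j, `|0 - t (phi j)| < eta /\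
   `|d - dk (phi j)| < eta /\ `|us - s^-1 *: (z - y (phi j))| < eta / 2.
  have /cvgrPdist_lt /(_ _ eta0) H1 := Htk.
  have /cvgrPdist_lt /(_ _ eta0) H2 := Hdk.
  have /cvgrPdist_lt /(_ _ eta2) H3 := Huk.
  have := filterI H1 (filterI H2 H3); case=> N _ HN; exists N.
  by apply: HN => /=.
case: (HA_pos _ _ HA (phi j)) => tj0 tauj0.
exists (t (phi j)), (dk (phi j)), (s^-1 *: (z - y (phi j))); split => //.
- by move: Hj1; rewrite sub0r normrN gtr0_norm.
- by rewrite distrC.
- have -> : s^-1 *: (z - y (phi j)) - v = (s^-1 *: (z - y (phi j)) - us) + (us - v).
    by rewrite addrA subrK.
  rewrite (le_lt_trans (ler_normD _ _)) // distrC.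
  move: Hj3 Hus; move: (`|us - _|) (`|us - v|) => a b; lra.
- have -> : x + t (phi j) *: dk (phi j) = q (phi j).
    rewrite Hyq /dk scalerDr scalerA addrA mulrC divfK ?gt_eqF //.
  have -> : s^-1 *: (z - y (phi j)) = (s * tau (phi j))^-1 *: (p (phi j) - q (phi j)).
    by rewrite Hpq scalerA invfM -mulrA mulVf ?gt_eqF ?mulr1.
  case: (Hq' (phi j)) => Sq Hmin.
  apply: prox_frechet => //.
  by rewrite invr_gt0 mulr_gt0.
Qed.

Lemma core_lim w v : closed S -> CA w -> limiting_normal CA w v ->
  dir_limiting_normal S x d v.
Proof.
move=> Sc Cw [xk [vk [HxC Hxk Hvk Hfr]]].
have Hm : forall m : nat, exists tdu : R * 'rV[R]_n * 'rV[R]_n,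
   [/\ 0 < tdu.1.1, tdu.1.1 < m.+1%:R^-1, `|tdu.1.2 - d| < m.+1%:R^-1,
       `|tdu.2 - v| < m.+1%:R^-1 & frechet_normal S (x + tdu.1.1 *: tdu.1.2) tdu.2].
  move=> m; set eta := m.+1%:R^-1.
  have eta0 : 0 < eta by rewrite invr_gt0 ltr0Sn.
  have eta2 : 0 < eta / 2 by rewrite divr_gt0.
  have /cvgrPdist_lt /(_ _ eta2) [N _ HN] := Hvk.
  have HvN : `|v - vk N| < eta / 2 by apply: HN => /=.
  have [t [d' [u [t0 teta Hd Hu Hfu]]]] := core (xk N) (vk N) Sc (HxC N) (Hfr N) _ eta2.
  exists (t, d', u); split => //=.
  - lra.
  - move: Hd; move: (`|d' - d|) => a; lra.
  - have -> : u - v = (u - vk N) + (vk N - v) by rewrite addrA subrK.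
    rewrite (le_lt_trans (ler_normD _ _)) // (distrC (vk N)).
    move: Hu HvN; move: (`|u - vk N|) (`|v - vk N|) => a b; lra.
have [f Hf] := choice Hm.
exists (fun m => (f m).1.1), (fun m => (f m).1.2), (fun m => (f m).2); split.
- by move=> k; case: (Hf k).
- apply: small_seq_cvg => k; case: (Hf k) => t0 tl _ _ _.
  by rewrite subr0 gtr0_norm.
- by apply: small_seq_cvg => k; case: (Hf k).
- by apply: small_seq_cvg => k; case: (Hf k).
- by move=> k; case: (Hf k).
Qed.

End Core.
Definition A2 (R : realType) (t tau : nat -> R) :=
  [/\ forall k, 0 < t k, t @ \oo --> (0 : R) & tau = (fun k => 2^-1 * t k ^+ 2)].

Definition A3 (R : realType) (t tau : nat -> R) := exists r : nat -> R,
  [/\ forall k, 0 < t k /\ 0 < r k, t @ \oo --> (0 : R) /\ r @ \oo --> (0 : R),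
      (fun k => t k / r k) @ \oo --> (0 : R) & tau = (fun k => 2^-1 * t k * r k)].

Arguments A2 {R}.
Arguments A3 {R}.
Section Inst.
Variables (R : realType) (n : nat).

Lemma half_cvg0 (f : nat -> R) : f @ \oo --> (0 : R) ->
  (fun k => 2^-1 * f k) @ \oo --> (0 : R).
Proof.
move=> Hf; rewrite -(mulr0 (2^-1 : R)); apply: cvgM => //; exact: cvg_cst.
Qed.

Lemma A2_pos (t tau : nat -> R) : A2 t tau -> forall k, 0 < t k /\ 0 < tau k.
Proof.
by case=> Ht _ -> k; split => //; rewrite mulr_gt0 ?invr_gt0 ?exprn_gt0.
Qed.
Lemma A2_t (t tau : nat -> R) : A2 t tau -> t @ \oo --> (0 : R).
Proof. by case. Qed.
Lemma A2_r (t tau : nat -> R) : A2 t tau -> (fun k => tau k / t k) @ \oo --> (0 : R).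
Proof.
case=> Ht Ht0 ->.
have -> : (fun k => 2^-1 * t k ^+ 2 / t k) = (fun k => 2^-1 * t k).
  by apply: funext => k; rewrite expr2 mulrA mulfK ?gt_eqF.
exact: half_cvg0.
Qed.
Lemma A2_sub (t tau : nat -> R) (phi : nat -> nat) : A2 t tau ->
  (forall j, (j <= phi j)%N) -> A2 (t \o phi) (tau \o phi).
Proof.
case=> Ht Ht0 -> Hphi; split => //.
- by move=> k; apply: Ht.
- exact: (subseq_cvg _ _ _ _ Hphi Ht0).
Qed.

Lemma A3_pos (t tau : nat -> R) : A3 t tau -> forall k, 0 < t k /\ 0 < tau k.
Proof.
case=> r [Hp _ _ ->] k; case: (Hp k) => h1 h2; split => //.
by rewrite !mulr_gt0 ?invr_gt0.
Qed.
Lemma A3_t (t tau : nat -> R) : A3 t tau -> t @ \oo --> (0 : R).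
Proof. by case=> r [_ [] ]. Qed.
Lemma A3_r (t tau : nat -> R) : A3 t tau -> (fun k => tau k / t k) @ \oo --> (0 : R).
Proof.
case=> r [Hp [_ Hr] _ ->].
have -> : (fun k => 2^-1 * t k * r k / t k) = (fun k => 2^-1 * r k).
  apply: funext => k; case: (Hp k) => h1 h2.
  by rewrite mulrAC mulfK ?gt_eqF.
exact: half_cvg0.
Qed.
Lemma A3_sub (t tau : nat -> R) (phi : nat -> nat) : A3 t tau ->
  (forall j, (j <= phi j)%N) -> A3 (t \o phi) (tau \o phi).
Proof.
case=> r [Hp [Ht Hr] Htr ->] Hphi; exists (r \o phi); split => //.
- by move=> k; apply: Hp.
- by split; [exact: (subseq_cvg _ _ _ _ Hphi Ht) | exact: (subseq_cvg _ _ _ _ Hphi Hr)].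
- exact: (subseq_cvg _ _ _ _ Hphi Htr).
Qed.

Lemma T2_eq (S : set 'rV[R]_n) x d : second_tangent S x d = @CA R n S x d (@A2 R).
Proof.
apply/seteqP; split => w.
- case=> t [wk [Ht Ht0 Hwk HS]].
  by exists t, (fun k => 2^-1 * t k ^+ 2), wk; split.
- case=> t [tau [wk [[Ht Ht0 Htau] Hwk HS]]].
  by exists t, wk; split => // k; have := HS k; rewrite Htau.
Qed.

Lemma T3_eq (S : set 'rV[R]_n) x d : asymp_second_tangent S x d = @CA R n S x d (@A3 R).
Proof.
apply/seteqP; split => w.
- case=> t [r [wk [Hp Htr Ht Hwk HS]]].
  exists t, (fun k => 2^-1 * t k * r k), wk; split => //.
  by exists r; split.
- case=> t [tau [wk [[r [Hp Htr Ht Htau]] Hwk HS]]].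
  by exists t, r, wk; split => // k; have := HS k; rewrite Htau.
Qed.

End Inst.

Theorem lemma2p4 (R : realType) (n : nat) (S : set 'rV[R]_n) (xbar d : 'rV[R]_n) :
  closed S -> S xbar -> tangent_cone S xbar d ->
  (forall w, second_tangent S xbar d w ->
     limiting_normal (second_tangent S xbar d) w `<=` dir_limiting_normal S xbar d) /\
  (forall w, asymp_second_tangent S xbar d w ->
     limiting_normal (asymp_second_tangent S xbar d) w `<=` dir_limiting_normal S xbar d).
Proof.
move=> Sc _ _; split => w.
- rewrite T2_eq => Cw v Hv.
  exact: (@core_lim R n S xbar d (@A2 R) (@A2_pos R) (@A2_t R) (@A2_r R) (@A2_sub R) w v Sc Cw Hv).
- rewrite T3_eq => Cw v Hv.
  exact: (@core_lim R n S xbar d (@A3 R) (@A3_pos R) (@A3_t R) (@A3_r R) (@A3_sub R) w v Sc Cw Hv).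
Qed.
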